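(* Let $R$ be a ring. The following conditions are equivalent. (1) For every exact complex $M$ and every bounded above complex $N$, if $N_n\in\underline{\mathfrak{Pr}}^{-1}_{R\text{-Mod}}(Z_{n-1}(M))$ for every $n\in\mathbb{Z}$, then $N\in\underline{\mathfrak{Pr}}^{-1}_{\mathscr{C}(R)}(M)$. (2) For every exact complex $M$ and every module $N$, if there exists $n\in\mathbb{Z}$ such that $N\in\underline{\mathfrak{Pr}}^{-1}_{R\text{-Mod}}(Z_{n-1}(M))$, then $\underline{N}[n]\in\underline{\mathfrak{Pr}}^{-1}_{\mathscr{C}(R)}(M)$. (3) $R$ is quasi-Frobenius.
   Context: $R$ is an associative ring with unit; modules are left $R$-modules; $\mathscr{C}(R)$ is the category of homologically indexed complexes, with $Z_n(X)=\mathrm{Ker}\,d_n^X$. A complex $X$ is bounded above if there is $b$ with $X_n=0$ for all $n\ge b$. For objects $M,N$ of an abelian category $\mathscr{A}$ with enough projectives ($R\text{-Mod}$ or $\mathscr{C}(R)$), $M$ is $N$-subprojective if every morphism $M\to N$ factors through a projective object; $\underline{\mathfrak{Pr}}^{-1}_{\mathscr{A}}(M)$ is the class of all $N$ such that $M$ is $N$-subprojective. For a module $N$, $\underline{N}$ is the complex with $N$ in degree $0$ and $0$ elsewhere; for a complex $X$, $X[n]$ is the complex with $X[n]_i=X_{i-n}$ and differential $(-1)^nd^X_{i-n}$. A ring is quasi-Frobenius if every projective module is injective (equivalently every injective module is projective). *)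

(* Defs.v *)
(* Modules over a ring R : pzRingType are lmodType R;
   complexes are Z-indexed families of such modules (homological indexing). *)
From HB Require Import structures.
From mathcomp Require Import all_boot all_order all_algebra.
From mathcomp Require Import zify.
Set Implicit Arguments. Unset Strict Implicit. Unset Printing Implicit Defensive.
Import Order.TTheory GRing.Theory Num.Theory.
Local Open Scope ring_scope.

Definition lin (R : pzRingType) (M N : lmodType R) (f : M -> N) :=
  forall (a : R) (x y : M), f (a *: x + y) = a *: f x + f y.

Lemma lin_0 (R : pzRingType) (M N : lmodType R) (f : M -> N) :
  lin f -> f 0 = 0.
Proof.
move=> H; have := H 1 0 0; rewrite !scale1r addr0.
by move/(congr1 (fun z => z - f 0)); rewrite addrK subrr => <-.
Qed.

Lemma lin_opp (R : pzRingType) (M N : lmodType R) (f : M -> N) x :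
  lin f -> f (- x) = - f x.
Proof.
move=> H; have := H (-1) x 0; rewrite addr0 (lin_0 H) addr0 !scaleN1r //.
Qed.

Definition projective_mod (R : pzRingType) (P : lmodType R) :=
  forall (M N : lmodType R) (p : M -> N), lin p -> (forall y, exists x, p x = y) ->
  forall h : P -> N, lin h -> exists k : P -> M, lin k /\ forall x, p (k x) = h x.

Definition injective_mod (R : pzRingType) (E : lmodType R) :=
  forall (M N : lmodType R) (i : M -> N), lin i -> injective i ->
  forall h : M -> E, lin h -> exists k : N -> E, lin k /\ forall x, k (i x) = h x.

Definition quasi_frobenius (R : pzRingType) :=
  forall P : lmodType R, projective_mod P -> injective_mod P.

Definition subproj_mod (R : pzRingType) (M N : lmodType R) :=
  forall h : M -> N, lin h -> exists P : lmodType R, projective_mod P /\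
    exists (f : M -> P) (g : P -> N), [/\ lin f, lin g & forall x, g (f x) = h x].

(* Complexes: d i j : X_i -> X_j, which is zero unless j = i - 1;
   so d i (i-1) is the differential d_i^X. *)
Unset Implicit Arguments.
Record complex (R : pzRingType) := Complex {
  cobj :> int -> lmodType R;
  cd : forall i j : int, cobj i -> cobj j;
  cd_lin : forall i j, lin (cd i j);
  cd_zero : forall i j : int, j != i - 1 -> forall x, cd i j x = 0;
  cd_dd : forall i j k x, cd j k (cd i j x) = 0 }.
Set Implicit Arguments.
Arguments cd {R} c i j _ : rename.
Arguments cd_lin {R} c i j _ _ _ : rename.

Definition cx_hom (R : pzRingType) (X Y : complex R) (f : forall i, X i -> Y i) :=
  (forall i, lin (f i)) /\ forall i j x, f j (cd X i j x) = cd Y i j (f i x).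

(* projective objects of C(R) (lifting against epimorphisms = degreewise surjections) *)
Definition projective_cx (R : pzRingType) (P : complex R) :=
  forall (X Y : complex R) (p : forall i, X i -> Y i), cx_hom p ->
  (forall i y, exists x, p i x = y) ->
  forall h : forall i, P i -> Y i, cx_hom h ->
  exists k : forall i, P i -> X i, cx_hom k /\ forall i x, p i (k i x) = h i x.

Definition subproj_cx (R : pzRingType) (M N : complex R) :=
  forall h : forall i, M i -> N i, cx_hom h ->
  exists P : complex R, projective_cx P /\
    exists (f : forall i, M i -> P i) (g : forall i, P i -> N i),
      [/\ cx_hom f, cx_hom g & forall i x, g i (f i x) = h i x].

Definition in_Z (R : pzRingType) (X : complex R) (k : int) (x : X k) :=
  cd X k (k - 1) x = 0.

(* R-linear maps Z_k(X) -> N, represented by functions on X_k whose values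
   only matter on Z_k(X) *)
Definition lin_on_Z (R : pzRingType) (X : complex R) (k : int) (N : lmodType R)
  (h : X k -> N) :=
  forall (a : R) (x y : X k), in_Z x -> in_Z y -> h (a *: x + y) = a *: h x + h y.

Definition subproj_Z (R : pzRingType) (X : complex R) (k : int) (N : lmodType R) :=
  forall h : X k -> N, lin_on_Z h ->
  exists P : lmodType R, projective_mod P /\
    exists (f : X k -> P) (g : P -> N),
      [/\ lin_on_Z f, lin g & forall x, in_Z x -> g (f x) = h x].

Definition exact_cx (R : pzRingType) (X : complex R) :=
  forall (n : int) (x : X n), cd X n (n - 1) x = 0 ->
  exists y : X (n + 1), cd X (n + 1) n y = x.

Definition bounded_above (R : pzRingType) (X : complex R) :=
  exists b : int, forall n : int, b <= n -> forall x : X n, x = 0.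

Definition zero_mod (R : pzRingType) : lmodType R := 'rV[R]_0.

Definition stalk_obj (R : pzRingType) (N : lmodType R) (i : int) : lmodType R :=
  if i == 0 then N else zero_mod R.

Definition stalk (R : pzRingType) (N : lmodType R) : complex R.
Proof.
refine (@Complex R (stalk_obj N) (fun i j _ => 0) _ _ _) => //.
by move=> i j a x y; rewrite scaler0 addr0.
Defined.

Definition shift_d (R : pzRingType) (X : complex R) (n : int) (i j : int)
  (x : X (i - n)) : X (j - n) :=
  if odd (absz n) then - cd X (i - n) (j - n) x else cd X (i - n) (j - n) x.

Definition shift (R : pzRingType) (X : complex R) (n : int) : complex R.
Proof.
refine (@Complex R (fun i => X (i - n)) (@shift_d R X n) _ _ _).
- move=> i j a x y; rewrite /shift_d (cd_lin X).
  by case: (odd _) => //; rewrite opprD scalerN.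
- move=> i j Hij x; rewrite /shift_d cd_zero ?oppr0 ?if_same //.
  by apply: contra Hij => /eqP H; apply/eqP; lia.
- move=> i j k x; rewrite /shift_d.
  case: (odd _); rewrite ?(lin_opp _ (cd_lin X _ _)) cd_dd ?opprK ?oppr0 //.
Defined.

(* Main.v *)
From HB Require Import structures.
Require Import Defs.
From mathcomp Require Import all_boot all_order all_algebra.
From mathcomp Require Import zify.
From Stdlib Require Import ClassicalEpsilon.
Import Order.TTheory GRing.Theory Num.Theory.
Local Open Scope ring_scope.


Set Implicit Arguments. Unset Strict Implicit. Unset Printing Implicit Defensive.

Section Basics.
Variable R : pzRingType.

Lemma linD (M N : lmodType R) (f : M -> N) : lin f -> forall x y, f (x + y) = f x + f y.
Proof. by move=> H x y; have := H 1 x y; rewrite !scale1r. Qed.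

Lemma linZ (M N : lmodType R) (f : M -> N) : lin f -> forall a x, f (a *: x) = a *: f x.
Proof. by move=> H a x; have := H a x 0; rewrite !addr0 (lin_0 H) addr0. Qed.

Lemma linB (M N : lmodType R) (f : M -> N) : lin f -> forall x y, f (x - y) = f x - f y.
Proof. by move=> H x y; rewrite (linD H) (lin_opp _ H). Qed.

Lemma lin_comp (M N P : lmodType R) (f : M -> N) (g : N -> P) :
  lin f -> lin g -> lin (fun x => g (f x)).
Proof. by move=> Hf Hg a x y; rewrite Hf Hg. Qed.

Lemma lin_zero (M N : lmodType R) : lin (fun _ : M => (0 : N)).
Proof. by move=> a x y; rewrite scaler0 addr0. Qed.

Lemma lin_id (M : lmodType R) : lin (fun x : M => x).
Proof. by []. Qed.

Lemma lin_add (M N : lmodType R) (f g : M -> N) : lin f -> lin g -> lin (fun x => f x + g x).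
Proof.
by move=> Hf Hg a x y; rewrite Hf Hg scalerDr addrACA.
Qed.

Lemma lin_sub (M N : lmodType R) (f g : M -> N) : lin f -> lin g -> lin (fun x => f x - g x).
Proof.
move=> Hf Hg a x y; rewrite Hf Hg scalerDr scalerN opprD addrACA //.
Qed.

Lemma zero_mod0 (x : zero_mod R) : x = 0.
Proof. by apply/rowP => -[]. Qed.

Lemma proj_zero : projective_mod (zero_mod R).
Proof.
move=> M N p Hp Hs h Hh; exists (fun _ => 0); split; first exact: lin_zero.
by move=> x; rewrite (lin_0 Hp) (zero_mod0 x) (lin_0 Hh).
Qed.

Lemma subproj_Z_zero (X : complex R) k : subproj_Z X k (zero_mod R).
Proof.
move=> h Hh; exists (zero_mod R); split; first exact: proj_zero.
exists (fun _ => 0), (fun _ => 0); split => //.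
- by move=> a x y _ _; rewrite scaler0 addr0.
- exact: lin_zero.
- by move=> x _; rewrite (zero_mod0 (h x)).
Qed.

Lemma cdD (X : complex R) i j : forall x y, cd X i j (x + y) = cd X i j x + cd X i j y.
Proof. exact: linD (cd_lin X i j). Qed.
Lemma cdZ (X : complex R) i j : forall a x, cd X i j (a *: x) = a *: cd X i j x.
Proof. exact: linZ (cd_lin X i j). Qed.
Lemma cd0 (X : complex R) i j : cd X i j 0 = 0.
Proof. exact: lin_0 (cd_lin X i j). Qed.
Lemma cdN (X : complex R) i j x : cd X i j (- x) = - cd X i j x.
Proof. exact: lin_opp (cd_lin X i j). Qed.
Lemma cdB (X : complex R) i j x y : cd X i j (x - y) = cd X i j x - cd X i j y.
Proof. exact: (linB (@cd_lin R X i j) x y). Qed.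

End Basics.

Lemma one_two (R : pzRingType) :
  (forall (M N : complex R), exact_cx M -> bounded_above N ->
      (forall n : int, subproj_Z M (n - 1) (N n)) -> subproj_cx M N) ->
   (forall (M : complex R) (N : lmodType R), exact_cx M ->
      forall n : int, subproj_Z M (n - 1) N ->
      subproj_cx M (shift (stalk N) n)).
Proof.
move=> H1 M N EM n HZ; apply: H1 => //.
  exists (n + 1) => m Hm; rewrite /= /stalk_obj.
  have -> : (m - n == 0) = false by apply/eqP; lia.
  exact: zero_mod0.
move=> m; rewrite /= /stalk_obj.
case: (eqVneq m n) => [->|ne].
  by rewrite subrr eqxx.
have -> : (m - n == 0) = false by apply/eqP => E; move/eqP: ne; lia.
exact: subproj_Z_zero.
Qed.


Set Implicit Arguments. Unset Strict Implicit. Unset Printing Implicit Defensive.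

Unset Implicit Arguments.
Section Tr.
Variable R : pzRingType.
Variable F : int -> lmodType R.

Definition tr (i j : int) (x : F i) : F j :=
  match @eqP _ i j with ReflectT e => eq_rect i F x j e | ReflectF _ => 0 end.

Lemma tr_id i x : tr i i x = x.
Proof.
rewrite /tr; case: eqP => // e; by rewrite (eq_irrelevance e erefl).
Qed.

Lemma tr_ne i j x : i != j -> tr i j x = 0.
Proof. by rewrite /tr; case: eqP. Qed.

Lemma tr_lin i j : lin (tr i j).
Proof.
rewrite /tr; case: eqP => [e|_]; last exact: lin_zero.
by subst j.
Qed.

Lemma tr_tr i j x : i = j -> tr j i (tr i j x) = x.
Proof. by move=> e; subst j; rewrite !tr_id. Qed.

End Tr.
Set Implicit Arguments.
Arguments tr {R} F i j x.
Arguments tr_id {R} F i x.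
Arguments tr_ne {R} F i j x.
Arguments tr_lin {R} F i j.
Arguments tr_tr {R} F i j x.

Lemma cd_tr (R : pzRingType) (N : complex R) k i j (z : N k) :
  k = i -> cd N k j z = cd N i j (tr N k i z).
Proof. by move=> e; subst k; rewrite tr_id. Qed.

Section Pairs.
Variable R : pzRingType.
Lemma lin_pair (M A B : lmodType R) (u : M -> A) (v : M -> B) :
  lin u -> lin v -> lin (fun m => ((u m, v m) : (A * B)%type)).
Proof. by move=> Hu Hv a x y; rewrite Hu Hv. Qed.
Lemma pair_add (A B : lmodType R) (x : A) (y : B) : ((x, y) : (A * B)%type) = (x, 0) + (0, y).
Proof. by apply/pair_eqP; rewrite /= addr0 add0r !eqxx. Qed.
Lemma fstD (A B : lmodType R) (p q : (A * B)%type) : (p + q).1 = p.1 + q.1. Proof. by []. Qed.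
Lemma sndD (A B : lmodType R) (p q : (A * B)%type) : (p + q).2 = p.2 + q.2. Proof. by []. Qed.
Lemma fstZ (A B : lmodType R) a (p : (A * B)%type) : (a *: p).1 = a *: p.1. Proof. by []. Qed.
Lemma sndZ (A B : lmodType R) a (p : (A * B)%type) : (a *: p).2 = a *: p.2. Proof. by []. Qed.
End Pairs.

Unset Implicit Arguments.
Section DiskSum.
Variable R : pzRingType.
Variable Q : int -> lmodType R.

Definition E_obj (i : int) : lmodType R := (Q (i - 1) * Q i)%type.
Definition E_d (i j : int) (p : E_obj i) : E_obj j := (0, tr Q (i - 1) j p.1).

Definition Ecx : complex R.
Proof.
refine (@Complex R E_obj E_d _ _ _).
- move=> i j a x y; rewrite /E_d /=.
  rewrite (tr_lin Q); apply/pair_eqP; rewrite /= scaler0 addr0 !eqxx //.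
- move=> i j H x; rewrite /E_d tr_ne //.
  by apply: contra H => /eqP ->.
- move=> i j k x; rewrite /E_d /=.
  by rewrite (lin_0 (tr_lin Q _ _)).
Defined.

Lemma Ecx_d i j p : cd Ecx i j p = (0, tr Q (i - 1) j p.1).
Proof. by []. Qed.

Hypothesis Qproj : forall i, projective_mod (Q i).

Lemma Ecx_proj : projective_cx Ecx.
Proof.
move=> X Y p [pl pc] ps h [hl hc].
have ex : forall i, exists V : Q (i - 1) -> X i, lin V /\
     forall x, p i (V x) = h i ((x, 0) : Ecx i).
  move=> i; have [V [HV1 HV2]] := Qproj (i - 1) _ _ _ (pl i) (ps i)
      _ (lin_comp (lin_pair (@lin_id _ _) (@lin_zero _ _ _)) (hl i)).
  by exists V.
pose V i := proj1_sig (constructive_indefinite_description _ (ex i)).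
have Vl i : lin (V i) by rewrite /V; case: constructive_indefinite_description => ? [].
have Vp i x : p i (V i x) = h i ((x, 0) : Ecx i).
  by rewrite /V; case: constructive_indefinite_description => ? [].
exists (fun i (q : Ecx i) => V i q.1 + cd X (i + 1) i (V (i + 1) (tr Q i (i + 1 - 1) q.2))).
split; first split.
- move=> i a x y; rewrite !fstD !sndD !fstZ !sndZ.
  rewrite (Vl i) (tr_lin Q) (Vl (i+1)) (cd_lin X).
  by rewrite scalerDr addrACA.


- move=> i j [x y] /=; rewrite /E_d /=.
  case: (eqVneq j (i - 1)) => [e|ne].
  + subst j; rewrite tr_id (lin_0 (Vl _)) add0r cdD cd_dd addr0.
    have gen : forall i' (e : i' = i) (x : Q (i - 1)),
        cd X i' (i - 1) (V i' (tr Q (i - 1) (i' - 1) x)) = cd X i (i - 1) (V i x).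
      by move=> i' e' x'; subst i'; rewrite tr_id.
    by apply: gen; lia.
  + have ne2 : i - 1 != j by rewrite eq_sym.
    rewrite (@cd_zero _ X i j ne) (tr_ne _ _ _ _ ne2).
    rewrite (lin_0 (Vl _)) add0r (lin_0 (tr_lin Q _ _)) (lin_0 (Vl _)).
    by rewrite cd0.
- move=> i [x y].
  rewrite (linD (pl i)) Vp pc Vp -hc /= /E_d /= tr_tr; last by lia.
  by rewrite -(linD (hl i)) -pair_add.
Qed.

Variable M : complex R.
Variable beta : forall i, M i -> Q i.
Hypothesis beta_lin : forall i, lin (beta i).

Definition f_into (i : int) (m : M i) : Ecx i := (beta (i - 1) (cd M i (i - 1) m), beta i m).

Lemma f_into_hom : cx_hom f_into.
Proof.
split.
- move=> i; apply: lin_pair; first exact: lin_comp (cd_lin M _ _) (beta_lin _).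
  exact: beta_lin.
- move=> i j m; rewrite /f_into /E_d.
  case: (eqVneq j (i - 1)) => [e|ne].
  + by subst j; rewrite Ecx_d cd_dd (lin_0 (beta_lin _)) tr_id.
  + have ne2 : i - 1 != j by rewrite eq_sym.
    rewrite Ecx_d (@cd_zero _ M i j ne) (tr_ne _ _ _ _ ne2).
    by rewrite cd0 !(lin_0 (beta_lin _)).
Qed.

Variable N : complex R.
Variable gamma : forall i, Q i -> N (i + 1).
Hypothesis gamma_lin : forall i, lin (gamma i).

Definition g_from (i : int) (q : Ecx i) : N i :=
  tr N (i - 1 + 1) i (gamma (i - 1) q.1) + cd N (i + 1) i (gamma i q.2).

Lemma g_from_hom : cx_hom g_from.
Proof.
split.
- move=> i a x y; rewrite /g_from !fstD !sndD !fstZ !sndZ.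
  rewrite (gamma_lin (i - 1)) (tr_lin N) (gamma_lin i) (cd_lin N).
  by rewrite scalerDr addrACA.
- move=> i j [x y]; rewrite /g_from Ecx_d.
  case: (eqVneq j (i - 1)) => [e|ne].
  + subst j; rewrite tr_id (lin_0 (gamma_lin _)) (lin_0 (tr_lin N _ _)) add0r.
    rewrite cdD cd_dd addr0; apply: cd_tr; lia.
  + have ne2 : i - 1 != j by rewrite eq_sym.
    rewrite (tr_ne _ _ _ _ ne2).
    rewrite (lin_0 (gamma_lin _)) (lin_0 (tr_lin N _ _)) add0r.
    by rewrite (@cd_zero _ N i j ne) (lin_0 (gamma_lin _)) cd0.
Qed.

Lemma g_f i m : g_from i (f_into i m) =
  tr N (i - 1 + 1) i (gamma (i - 1) (beta (i - 1) (cd M i (i - 1) m)))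
  + cd N (i + 1) i (gamma i (beta i m)).
Proof. by []. Qed.

End DiskSum.


Set Implicit Arguments. Unset Strict Implicit. Unset Printing Implicit Defensive.

Definition asb (Q : Prop) : bool := if excluded_middle_informative Q then true else false.
Lemma asbP (Q : Prop) : asb Q = true <-> Q.
Proof. by rewrite /asb; case: excluded_middle_informative. Qed.

Section Sub.
Variables (R : pzRingType) (V : lmodType R) (P : V -> Prop).
Hypotheses (P0 : P 0) (PC : forall a x y, P x -> P y -> P (a *: x + y)).

Definition subT := {x : V | asb (P x)}.
HB.instance Definition _ := Choice.on subT.

Lemma subT_inj (x y : subT) : sval x = sval y -> x = y.
Proof.
case: x => x px; case: y => y py /= e; subst y.
by rewrite (bool_irrelevance px py).
Qed.

Lemma PD x y : P x -> P y -> P (x + y).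
Proof. by move=> ? ?; rewrite -[x]scale1r; apply: PC. Qed.
Lemma PN x : P x -> P (- x).
Proof. by move=> ?; rewrite -scaleN1r -[_ *: x]addr0; apply: PC. Qed.
Lemma PZ a x : P x -> P (a *: x).
Proof. by move=> ?; rewrite -[_ *: x]addr0; apply: PC. Qed.

Definition sub0 : subT := exist _ 0 (proj2 (asbP _) P0).
Definition subadd (x y : subT) : subT :=
  exist _ (sval x + sval y) (proj2 (asbP _) (PD (proj1 (asbP _) (proj2_sig x)) (proj1 (asbP _) (proj2_sig y)))).
Definition subopp (x : subT) : subT :=
  exist _ (- sval x) (proj2 (asbP _) (PN (proj1 (asbP _) (proj2_sig x)))).
Definition subscale (a : R) (x : subT) : subT :=
  exist _ (a *: sval x) (proj2 (asbP _) (PZ a (proj1 (asbP _) (proj2_sig x)))).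

Lemma subaddA : associative subadd.
Proof. by move=> x y z; apply: subT_inj; rewrite /= addrA. Qed.
Lemma subaddC : commutative subadd.
Proof. by move=> x y; apply: subT_inj; rewrite /= addrC. Qed.
Lemma subadd0 : left_id sub0 subadd.
Proof. by move=> x; apply: subT_inj; rewrite /= add0r. Qed.
Lemma subaddN : left_inverse sub0 subopp subadd.
Proof. by move=> x; apply: subT_inj; rewrite /= addNr. Qed.

HB.instance Definition _ := GRing.isZmodule.Build subT subaddA subaddC subadd0 subaddN.

Lemma subscaleA a b v : subscale a (subscale b v) = subscale (a * b) v.
Proof. by apply: subT_inj; rewrite /= scalerA. Qed.
Lemma subscale1 : left_id 1 subscale.
Proof. by move=> x; apply: subT_inj; rewrite /= scale1r. Qed.
Lemma subscaleDr : right_distributive subscale +%R.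
Proof. by move=> a x y; apply: subT_inj; rewrite /= scalerDr. Qed.
Lemma subscaleDl v : {morph subscale^~ v: a b / a + b}.
Proof. by move=> a b; apply: subT_inj; rewrite /= scalerDl. Qed.

HB.instance Definition _ := GRing.Zmodule_isLmodule.Build R subT subscaleA subscale1 subscaleDr subscaleDl.

Lemma sval_lin : lin (fun x : subT => sval x).
Proof. by []. Qed.

Lemma extend (E : lmodType R) : injective_mod E -> forall f : V -> E,
  (forall a x y, P x -> P y -> f (a *: x + y) = a *: f x + f y) ->
  exists F : V -> E, lin F /\ forall x, P x -> F x = f x.
Proof.
move=> Ei f Hf.
have [|k [kl kx]] := Ei subT V (fun x => sval x) sval_lin (@subT_inj) (fun z => f (sval z)).
  move=> a [x px] [y py] /=; apply: Hf; exact/asbP.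
exists k; split => // x px.
exact: (kx (exist _ x (proj2 (asbP _) px))).
Qed.

End Sub.


Unset Implicit Arguments. Unset Strict Implicit. Unset Printing Implicit Defensive.

Lemma exact_at (R : pzRingType) (M : complex R) : exact_cx M ->
  forall i (z : M (i - 1)), cd M (i - 1) (i - 1 - 1) z = 0 ->
  exists y : M i, cd M i (i - 1) y = z.
Proof.
move=> EM i z Hz; have := EM (i - 1) z Hz.
have -> : i - 1 + 1 = i by lia.
by [].
Qed.

Section QF1.
Variable R : pzRingType.
Hypothesis QF : quasi_frobenius R.
Variables M N : complex R.
Hypothesis EM : exact_cx M.
Variable b : int.
Hypothesis Nb : forall n : int, b <= n -> forall x : N n, x = 0.
Hypothesis HZ : forall n : int, subproj_Z M (n - 1) (N n).
Variable h : forall i, M i -> N i.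
Hypothesis hh : cx_hom h.

Record D (i : int) := mkD {
  DQ : lmodType R;
  DQp : projective_mod DQ;
  Dbeta : M i -> DQ;
  Dgamma : DQ -> N (i + 1);
  Dbl : lin Dbeta;
  Dgl : lin Dgamma }.

Definition s i (a : D i) (m : M i) : N (i + 1) := Dgamma i a (Dbeta i a m).

Lemma s_lin i (a : D i) : lin (s i a).
Proof. exact: lin_comp (Dbl i a) (Dgl i a). Qed.

Definition inv i (a : D i) : Prop := forall y : M (i + 1),
  h i (cd M (i + 1) i y) = cd N (i + 1) i (s i a (cd M (i + 1) i y)).

Definition rel i j (a : D i) (c : D j) : Prop := forall m : M i,
  h i m = tr N (j + 1) i (s j c (cd M i j m)) + cd N (i + 1) i (s i a m).

Definition triv i : D i :=
  @mkD i (zero_mod R) (@proj_zero R) (fun _ => 0) (fun _ => 0) (@lin_zero _ _ _) (@lin_zero _ _ _).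

Definition castD (i j : int) (a : D i) : D j :=
  match @eqP _ i j with ReflectT e => eq_rect i D a j e | ReflectF _ => triv j end.

Lemma castD_id i a : castD i i a = a.
Proof. rewrite /castD; case: eqP => // e; by rewrite (eq_irrelevance e erefl). Qed.

Lemma inv_cast i j (a : D i) : i = j -> inv i a -> inv j (castD i j a).
Proof. by move=> e; subst j; rewrite castD_id. Qed.

Lemma rel_cast i i' j j' (a : D i) (c : D j) : i = i' -> j = j' -> rel i j a c ->
  rel i' j' (castD i i' a) (castD j j' c).
Proof. by move=> e e'; subst i' j'; rewrite !castD_id. Qed.

Lemma step i (a : D i) : inv i a -> exists c : D (i - 1), inv (i - 1) c /\ rel i (i - 1) a c.
Proof.
move=> Ha.
have [hl hc] := hh.
pose t (m : M i) : N i := h i m - cd N (i + 1) i (s i a m).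
have tl : lin t by apply: lin_sub; [exact: hl | exact: lin_comp (s_lin i a) (cd_lin N _ _)].
have tZ : forall m, cd M i (i - 1) m = 0 -> t m = 0.
  move=> m Hm; have [y <-] := EM i m Hm.
  by rewrite /t Ha subrr.
pose lift (z : M (i - 1)) : M i := epsilon (inhabits (0 : M i)) (fun y : M i => cd M i (i - 1) y = z).
have liftP : forall z, in_Z z -> cd M i (i - 1) (lift z) = z.
  move=> z Hz; rewrite /lift; have E := @exact_at _ M EM i z Hz; exact: (epsilon_spec _ _ E).
pose t' z := t (lift z).
have inZd : forall m : M i, in_Z (cd M i (i - 1) m) by move=> m; exact: cd_dd.
have t'd : forall m : M i, t' (cd M i (i - 1) m) = t m.
  move=> m; rewrite /t' -[t m]add0r -(tZ (lift (cd M i (i - 1) m) - m)).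
    by rewrite (linB tl) subrK.
  by rewrite cdB liftP // subrr.
have inZC : forall (a0 : R) (x y : M (i - 1)), in_Z x -> in_Z y -> in_Z (a0 *: x + y).
  by move=> a0 x y; rewrite /in_Z (cd_lin M) => -> ->; rewrite scaler0 addr0.
have t'l : lin_on_Z t'.
  move=> a0 x y Hx Hy.
  rewrite /t' -(tl a0) -[LHS](subrK (t (a0 *: lift x + lift y))) -(linB tl) tZ ?add0r //.
  have Hs := inZC a0 x y Hx Hy.
  by rewrite cdB (cd_lin M) !liftP // subrr.
have [P [Pp [f [g [fl gl fg]]]]] := HZ i t' t'l.
have P0 : @in_Z R M (i - 1) 0 by rewrite /in_Z cd0.
have [F [Fl FZ]] := @extend R (M (i - 1)) (@in_Z R M (i - 1)) P0 inZC P (QF P Pp) f fl.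
pose gam (p : P) : N (i - 1 + 1) := tr N i (i - 1 + 1) (g p).
have gaml : lin gam by exact: lin_comp gl (tr_lin N _ _).
exists (@mkD (i - 1) P Pp F gam Fl gaml).
have Hrel : rel i (i - 1) a (@mkD (i - 1) P Pp F gam Fl gaml).
  move=> m; rewrite /s /= /gam tr_tr; last by lia.
  rewrite FZ ?fg ?inZd // t'd /t subrK //.
split => //.
have gen : forall i' (e : i' = i) (y : M i'),
   h (i - 1) (cd M i' (i - 1) y) =
   cd N (i - 1 + 1) (i - 1) (s (i - 1) (@mkD (i - 1) P Pp F gam Fl gaml) (cd M i' (i - 1) y)).
  move=> i' e y; subst i'.
  rewrite hc (Hrel y) cdD cd_dd addr0.
  by symmetry; apply: cd_tr; lia.
move=> y; apply: gen; lia.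
Qed.

Definition Dinv i := {a : D i | inv i a}.

Definition stepf i (a : Dinv i) :=
  constructive_indefinite_description _ (step i (proj1_sig a) (proj2_sig a)).

Definition c0 := b - 1.

Lemma inv0 : inv (c0 - (0%N)%:Z) (triv _).
Proof.
have [hl hc] := hh.
move=> y; rewrite hc (Nb (c0 - (0%N)%:Z + 1) _ (h _ y)); last by rewrite /c0; lia.
by rewrite /s /= !cd0.
Qed.

Definition rec0 : Dinv (c0 - (0%N)%:Z) := exist _ (triv _) inv0.

Lemma eqk (k : nat) : c0 - k%:Z - 1 = c0 - (k.+1)%:Z.
Proof. lia. Qed.

Definition next (k : nat) (r : Dinv (c0 - k%:Z)) : Dinv (c0 - (k.+1)%:Z) :=
  let c := stepf _ r in
  exist _ (castD _ _ (proj1_sig c)) (inv_cast _ _ (proj1_sig c) (eqk k) (proj1 (proj2_sig c))).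

Fixpoint recD (k : nat) : Dinv (c0 - k%:Z) :=
  match k return Dinv (c0 - k%:Z) with
  | 0%N => rec0
  | k'.+1 => next k' (recD k')
  end.

Lemma rec_rel k : rel (c0 - k%:Z) (c0 - (k.+1)%:Z) (proj1_sig (recD k)) (proj1_sig (recD k.+1)).
Proof.
rewrite [recD k.+1]/= /next.
case: (stepf _ (recD k)) => c [_ Hr] /=.
have := rel_cast _ (c0 - k%:Z) _ (c0 - (k.+1)%:Z) _ _ erefl (eqk k) Hr.
by rewrite castD_id.
Qed.

Definition Dall i : D i :=
  if c0 < i then triv i
  else castD (c0 - (absz (c0 - i))%:Z) i (proj1_sig (recD (absz (c0 - i)))).

Lemma fin i (m : M i) :
  h i m = tr N (i - 1 + 1) i (s (i - 1) (Dall (i - 1)) (cd M i (i - 1) m))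
          + cd N (i + 1) i (s i (Dall i) m).
Proof.
case: (boolP (c0 < i)) => Hi.
  have z := Nb i (ltac:(rewrite /c0 in Hi; lia)).
  by rewrite [LHS]z [RHS]z.
rewrite /Dall (negbTE Hi).
have -> : (c0 < i - 1) = false by apply/negbTE; move: Hi; lia.
have -> : absz (c0 - (i - 1))%R = (absz (c0 - i)%R).+1 by move: Hi; lia.
have := rel_cast _ i _ (i - 1) _ _ _ _ (rec_rel (absz (c0 - i))).
apply; move: Hi; lia.
Qed.

Lemma qf_main : exists P : complex R, projective_cx P /\
    exists (f : forall i, M i -> P i) (g : forall i, P i -> N i),
      [/\ cx_hom f, cx_hom g & forall i x, g i (f i x) = h i x].
Proof.
pose Q i := DQ i (Dall i).
pose beta i : M i -> Q i := Dbeta i (Dall i).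
pose gamma i : Q i -> N (i + 1) := Dgamma i (Dall i).
exists (Ecx _ Q); split; first exact: (Ecx_proj _ Q (fun i => DQp i (Dall i))).
exists (f_into _ Q M beta), (g_from _ Q N gamma); split.
- exact: (f_into_hom _ Q M beta (fun i => Dbl i (Dall i))).
- exact: (g_from_hom _ Q N gamma (fun i => Dgl i (Dall i))).
- by move=> i x; rewrite g_f; symmetry; exact: fin.
Qed.

End QF1.

Lemma qf_one (R : pzRingType) : quasi_frobenius R ->
  (forall (M N : complex R), exact_cx M -> bounded_above N ->
      (forall n : int, subproj_Z M (n - 1) (N n)) -> subproj_cx M N).
Proof.
move=> QF M N EM [b Nb] HZ h hh.
exact: (qf_main R QF M N EM b Nb HZ h hh).
Qed.


Set Implicit Arguments. Unset Strict Implicit. Unset Printing Implicit Defensive.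

Section Quot.
Variables (R : pzRingType) (A B : lmodType R) (iota : A -> B).
Hypothesis iotal : lin iota.

Definition inA (b : B) : Prop := exists a, b = iota a.

Lemma inA0 : inA 0.
Proof. by exists 0; rewrite (lin_0 iotal). Qed.
Lemma inAD x y : inA x -> inA y -> inA (x + y).
Proof. by move=> [a ->] [c ->]; exists (a + c); rewrite (linD iotal). Qed.
Lemma inAN x : inA x -> inA (- x).
Proof. by move=> [a ->]; exists (- a); rewrite (lin_opp _ iotal). Qed.
Lemma inAZ r x : inA x -> inA (r *: x).
Proof. by move=> [a ->]; exists (r *: a); rewrite (linZ iotal). Qed.
Lemma inAB x y : inA x -> inA y -> inA (x - y).
Proof. by move=> ? ?; apply: inAD => //; apply: inAN. Qed.

Lemma exP (b : B) : exists x, asb (inA (x - b)).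
Proof. by exists b; apply/asbP; rewrite subrr; exact: inA0. Qed.

Definition canon (b : B) : B := xchoose (exP b).

Lemma canon_rel b : inA (canon b - b).
Proof. exact/asbP/(xchooseP (exP b)). Qed.

Lemma canon_eq u v : inA (u - v) -> canon u = canon v.
Proof.
move=> H; apply: eq_xchoose => x.
apply/idP/idP => /asbP H1; apply/asbP.
- by have := inAD H1 H; rewrite addrA subrK.
- by have := inAB H1 H; rewrite opprB addrA subrK.
Qed.

Lemma canon_eqE u v : canon u = canon v -> inA (u - v).
Proof.
move=> e; have := inAB (canon_rel v) (canon_rel u).
by rewrite e opprB addrC addrA subrK.
Qed.

Lemma canon_idem b : canon (canon b) = canon b.
Proof. exact/canon_eq/canon_rel. Qed.

Definition quotT := {x : B | canon x == x}.
HB.instance Definition _ := Choice.on quotT.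

Lemma quotT_inj (x y : quotT) : sval x = sval y -> x = y.
Proof.
case: x => x px; case: y => y py /= e; subst y.
by rewrite (bool_irrelevance px py).
Qed.

Definition qpi (b : B) : quotT := exist _ (canon b) (introT eqP (canon_idem b)).

Lemma qpi_eq u v : inA (u - v) -> qpi u = qpi v.
Proof. by move=> H; apply: quotT_inj; rewrite /= (canon_eq H). Qed.

Lemma qpi_eqE u v : qpi u = qpi v -> inA (u - v).
Proof. by move=> e; apply: canon_eqE; exact: (congr1 sval e). Qed.

Lemma qpi_val (x : quotT) : qpi (sval x) = x.
Proof. by apply: quotT_inj; rewrite /=; apply/eqP; case: x. Qed.

Lemma val_qpi_rel u : inA (sval (qpi u) - u).
Proof. exact: canon_rel. Qed.

Lemma qpiDl u v : qpi (sval (qpi u) + v) = qpi (u + v).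
Proof. by apply: qpi_eq; rewrite opprD addrACA subrr addr0; exact: val_qpi_rel. Qed.
Lemma qpiDr u v : qpi (u + sval (qpi v)) = qpi (u + v).
Proof. by rewrite addrC qpiDl addrC. Qed.
Lemma qpiN u : qpi (- sval (qpi u)) = qpi (- u).
Proof. by apply: qpi_eq; rewrite -opprD; apply: inAN; exact: val_qpi_rel. Qed.
Lemma qpiZ r u : qpi (r *: sval (qpi u)) = qpi (r *: u).
Proof. by apply: qpi_eq; rewrite -scalerBr; apply: inAZ; exact: val_qpi_rel. Qed.

Definition qadd (x y : quotT) : quotT := qpi (sval x + sval y).
Definition qzero : quotT := qpi 0.
Definition qopp (x : quotT) : quotT := qpi (- sval x).
Definition qscale (r : R) (x : quotT) : quotT := qpi (r *: sval x).

Lemma qaddA : associative qadd.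
Proof. by move=> x y z; rewrite /qadd qpiDl qpiDr addrA. Qed.
Lemma qaddC : commutative qadd.
Proof. by move=> x y; rewrite /qadd addrC. Qed.
Lemma qadd0 : left_id qzero qadd.
Proof. by move=> x; rewrite /qadd /qzero qpiDl add0r qpi_val. Qed.
Lemma qaddN : left_inverse qzero qopp qadd.
Proof. by move=> x; rewrite /qadd /qopp /qzero qpiDl addNr. Qed.

HB.instance Definition _ := GRing.isZmodule.Build quotT qaddA qaddC qadd0 qaddN.

Lemma qscaleA a b v : qscale a (qscale b v) = qscale (a * b) v.
Proof. by rewrite /qscale qpiZ scalerA. Qed.
Lemma qscale1 : left_id 1 qscale.
Proof. by move=> x; rewrite /qscale scale1r qpi_val. Qed.
Lemma qscaleDr : right_distributive qscale +%R.
Proof.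
move=> a x y; rewrite /qscale /GRing.add /= /qadd qpiZ qpiDl qpiDr.
by rewrite scalerDr.
Qed.
Lemma qscaleDl v : {morph qscale^~ v: a b / a + b}.
Proof.
move=> a b; rewrite /qscale /GRing.add /= /qadd qpiDl qpiDr.
by rewrite scalerDl.
Qed.

HB.instance Definition _ := GRing.Zmodule_isLmodule.Build R quotT qscaleA qscale1 qscaleDr qscaleDl.

Lemma qpi_lin : lin qpi.
Proof.
move=> a x y.
change (qpi (a *: x + y) = qpi (sval (qpi (a *: sval (qpi x))) + sval (qpi y))).
rewrite qpiDl qpiDr; symmetry; apply: qpi_eq.
rewrite opprD addrACA subrr addr0 -scalerBr; apply: inAZ; exact: val_qpi_rel.
Qed.

Lemma qpi_surj (x : quotT) : exists b, qpi b = x.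
Proof. by exists (sval x); exact: qpi_val. Qed.

Lemma qpi0 b : qpi b = 0 -> inA b.
Proof. by move=> e; have := qpi_eqE (u := b) (v := 0) e; rewrite subr0. Qed.

End Quot.


Unset Implicit Arguments. Unset Strict Implicit. Unset Printing Implicit Defensive.

Section Three.
Variables (R : pzRingType) (A B : lmodType R) (iota : A -> B).
Hypothesis iotal : lin iota.
Hypothesis iotai : injective iota.

Definition Cq : lmodType R := quotT iotal.
Definition qp : B -> Cq := qpi iotal.

Definition Mobj (i : int) : lmodType R :=
  match i with Posz 2 => A | Posz 1 => B | Posz 0 => Cq | _ => zero_mod R end.

Definition Md (i j : int) : Mobj i -> Mobj j :=
  match i as i0, j as j0 return Mobj i0 -> Mobj j0 with
  | Posz 2, Posz 1 => iota
  | Posz 1, Posz 0 => qp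
  | _, _ => fun _ => 0
  end.

Lemma Md_lin i j : lin (Md i j).
Proof.
case: i => [[|[|[|i]]]|i]; case: j => [[|[|[|j]]]|j]; try exact: (@lin_zero _ _ _).
- exact: qpi_lin.
- exact: iotal.
Qed.


Lemma qp_iota a : qp (iota a) = 0.
Proof.
change (qpi iotal (iota a) = qpi iotal 0); apply: qpi_eq.
by rewrite subr0; exists a.
Qed.

Lemma Md_zero i j : j != i - 1 -> forall x, Md i j x = 0.
Proof.
case: i => [[|[|[|i]]]|i]; case: j => [[|[|[|j]]]|j] //.
Qed.

Lemma Md_dd i j k x : Md j k (Md i j x) = 0.
Proof.
case: i x => [[|[|[|i]]]|i] x; case: j => [[|[|[|j]]]|j];
  rewrite ?(lin_0 (Md_lin _ _)) //.
case: k => [[|[|[|k]]]|k] //.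
exact: qp_iota.
Qed.

Definition Mcx : complex R := @Complex R Mobj Md Md_lin Md_zero Md_dd.


Lemma Mcx_exact : exact_cx Mcx.
Proof.
move=> n; case: n => [[|[|[|n]]]|n] x Hx.
- have [y <-] := @qpi_surj R A B iota iotal x; by exists y.
- have [a ->] := @qpi0 R A B iota iotal x Hx; by exists a.
- exists 0; have : iota x = iota 0 by rewrite (lin_0 iotal); exact: Hx.
  by move/iotai => ->.
- by exists 0; rewrite (zero_mod0 x).
- case: n x Hx => [|n] x Hx.
  + by exists 0; rewrite (zero_mod0 x).
  + by exists 0; rewrite (zero_mod0 x).
Qed.

End Three.

Lemma cd_shift_stalk (R : pzRingType) (N : lmodType R) n i j x :
  cd (shift (stalk N) n) i j x = 0.
Proof. by rewrite /= /shift_d; case: odd => //; rewrite oppr0. Qed.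

Section Two.
Variables (R : pzRingType) (A B : lmodType R) (iota : A -> B).
Hypothesis iotal : lin iota.
Hypothesis iotai : injective iota.
Variables (P : lmodType R) (Pp : projective_mod P) (hA : A -> P).
Hypothesis hAl : lin hA.
Hypothesis H2 : forall (M : complex R) (N : lmodType R), exact_cx M ->
      forall n : int, subproj_Z M (n - 1) N ->
      subproj_cx M (shift (stalk N) n).

Definition Hm (i : int) : Mobj R A B iota iotal i -> (shift (stalk P) 2) i :=
  match i as i0 return Mobj R A B iota iotal i0 -> (shift (stalk P) 2) i0 with
  | Posz 2 => hA
  | _ => fun _ => 0
  end.

Lemma Hm_hom : cx_hom (X := Mcx R A B iota iotal) Hm.
Proof.
split.
  by case=> [[|[|[|i]]]|i]; try exact: (@lin_zero _ _ _).
move=> i j x; rewrite cd_shift_stalk.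
case: j => [[|[|[|j]]]|j] //=; case: i x => [[|[|[|i]]]|i] x //=; exact: lin_0 hAl.
Qed.

Lemma sZ : subproj_Z (Mcx R A B iota iotal) (2 - 1) P.
Proof.
move=> h' hl'; exists P; split => //; exists h', (fun p => p); split => //.
Qed.


Lemma ext : exists k : B -> P, lin k /\ forall x, k (iota x) = hA x.
Proof.
have [Q [Qp [f [g [[fl fc] [gl gc] fg]]]]] :=
  H2 (Mcx R A B iota iotal) P (Mcx_exact R A B iota iotal iotai) 2 sZ Hm Hm_hom.
pose Q' i := Q (i + 1).
pose E := Ecx R Q'.
pose pi i (p : E i) : Q i := tr Q (i - 1 + 1) i p.1 + cd Q (i + 1) i p.2.
have pil : forall i, lin (pi i).
  move=> i a x y; rewrite /pi fstD sndD fstZ sndZ (tr_lin Q) (cd_lin Q).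
  by rewrite scalerDr addrACA.
have pic : forall i j p, pi j (cd E i j p) = cd Q i j (pi i p).
  move=> i j [x y]; rewrite /pi Ecx_d.
  case: (eqVneq j (i - 1)) => [e|ne].
  + subst j; rewrite /= tr_id (lin_0 (tr_lin Q _ _)) add0r cdD cd_dd addr0.
    by apply: cd_tr; lia.
  + have ne2 : i - 1 != j by rewrite eq_sym.
    rewrite /= (tr_ne Q' _ _ _ ne2) (lin_0 (tr_lin Q _ _)) cd0 addr0.
    by rewrite (@cd_zero _ Q i j ne).
have pis : forall i (q : Q i), exists p, pi i p = q.
  move=> i q; exists ((tr Q i (i - 1 + 1) q, 0) : E i).
  by rewrite /pi /= tr_tr ?cd0 ?addr0 //; lia.
have [k [[kl kc] kpi]] := Qp E Q pi (conj pil pic) pis (fun i q => q)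
   (conj (fun i => @lin_id _ _) (fun i j x => erefl)).
pose G (b : B) : P := g 2 (tr Q (1 + 1) 2 (k 1 (f 1 b)).2).
exists G; split.
  move=> a x y; rewrite /G (fl 1) (kl 1) sndD sndZ (tr_lin Q) (gl 2) //.
move=> a.
have e1 : f 1 (iota a) = cd Q 2 1 (f 2 a) := fc 2 1 a.
have e2 : k 1 (cd Q 2 1 (f 2 a)) = cd E 2 1 (k 2 (f 2 a)) := kc 2 1 _.
have e3 := kpi 2 (f 2 a).
rewrite /G e1 e2 Ecx_d /=.
have trc : forall z : Q (2 - 1 + 1), tr Q (1 + 1) 2 (tr Q' (2 - 1) 1 z) = tr Q (2 - 1 + 1) 2 z.
  by move=> z; rewrite [tr Q' _ _ _]tr_id.
rewrite trc.
have e4 : tr Q (2 - 1 + 1) 2 (k 2 (f 2 a)).1 = f 2 a - cd Q (2 + 1) 2 (k 2 (f 2 a)).2.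
  have e4gen : forall (u v w : Q 2), u + v = w -> u = w - v by move=> u v w <-; rewrite addrK.
  exact: (e4gen _ _ _ e3).
rewrite e4 (linB (gl 2)) fg gc cd_shift_stalk subr0 //.
Qed.

End Two.

Lemma two_qf (R : pzRingType) :
  (forall (M : complex R) (N : lmodType R), exact_cx M ->
      forall n : int, subproj_Z M (n - 1) N ->
      subproj_cx M (shift (stalk N) n)) -> quasi_frobenius R.
Proof.
move=> H2 P Pp A B iota iotal iotai hA hAl.
exact: (ext R A B iota iotal iotai P Pp hA hAl H2).
Qed.


Theorem proposition2p2 (R : pzRingType) :
  ((forall (M N : complex R), exact_cx M -> bounded_above N ->
      (forall n : int, subproj_Z M (n - 1) (N n)) -> subproj_cx M N)
   <->
   (forall (M : complex R) (N : lmodType R), exact_cx M ->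
      forall n : int, subproj_Z M (n - 1) N ->
      subproj_cx M (shift (stalk N) n)))
  /\
  ((forall (M : complex R) (N : lmodType R), exact_cx M ->
      forall n : int, subproj_Z M (n - 1) N ->
      subproj_cx M (shift (stalk N) n))
   <-> quasi_frobenius R).
Proof.
split; split.
- exact: one_two.
- by move=> H2; apply: qf_one; exact: two_qf H2.
- exact: two_qf.
- by move=> QF; apply: one_two; exact: qf_one.
Qed.
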